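(* Let $\beta\in(0,1)$, let $G=(V,E)$ be an $n$-vertex graph, let $P_1\subseteq[\lfloor\beta n\rfloor]$ with $|P_1|=l\ge 1$ and $t_1:=\max P_1$, let $p_1<p_2$ be positions in $[\lfloor\beta n\rfloor]\setminus P_1$ with $t_1<p_1$, and let $S\subseteq[\lfloor\beta n\rfloor]\setminus(P_1\cup\{p_2\})$ with $p_1\in S$. Let $\pi$ be a uniformly random bijection $[n]\to V$ and $\sigma\colon S\to V$ any injective map. Then the conditional probability, given $\pi|_S=\sigma$, that $\pi(p_1)$ and $\pi(p_2)$ are adjacent and both alive in step $t_1+1$ is at most $\frac{1}{e\cdot l\cdot(1-\beta)}$.
   Context: Given a bijection $\pi\colon[n]\to V$, the sequential greedy algorithm processes steps $t=1,\dots,n$: initially all vertices are alive; in step $t$, if $\pi(t)$ is alive, it is added to the independent set and $\pi(t)$ together with all its neighbors become dead for all later steps; if $\pi(t)$ is dead, nothing happens. A vertex is alive in step $t$ if it has not become dead in any step $t'<t$. *)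

(* Defs.v *)
From mathcomp Require Import all_boot.
From Stdlib Require Import Reals.
Set Implicit Arguments. Unset Strict Implicit. Unset Printing Implicit Defensive.

Definition floorn (b : R) (n : nat) : nat := Z.to_nat (Int_part (b * INR n)).

(* Sequential greedy: given the sequence of vertices processed in order,
   return the set of dead vertices after processing all of them. *)
Fixpoint greedy_dead (V : finType) (e : rel V) (D : {set V}) (s : seq V)
  : {set V} :=
  match s with
  | [::] => D
  | u :: s' => greedy_dead e (if u \in D then D else D :|: (u |: [set w | e u w])) s'
  end.

(* Positions are 0-based: ordinal i : 'I_n stands for position/step i+1 of the
   paper.  [order f] is the list pi(1), ..., pi(n). *)
Definition order (V : finType) n (f : {ffun 'I_n -> V}) : seq V :=
  [seq f i | i <- enum 'I_n].

(* v is alive at (1-based) step k+1, i.e. not killed in the first k steps. *)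
Definition alive_at (V : finType) (e : rel V) n (f : {ffun 'I_n -> V}) (k : nat)
  (v : V) : bool :=
  v \notin greedy_dead e set0 (take k (order f)).

Definition cond_set (V : finType) n (S : {set 'I_n}) (sigma : 'I_n -> V)
  : {set {ffun 'I_n -> V}} :=
  [set f : {ffun 'I_n -> V} | injectiveb f & [forall i in S, f i == sigma i]].

(* the event: pi(p1), pi(p2) adjacent and both alive in (1-based) step t1+1,
   where t1 : 'I_n is 0-based, so the first (t1+1) steps have been processed *)
Definition event (V : finType) (e : rel V) n (t1 p1 p2 : 'I_n)
  (f : {ffun 'I_n -> V}) : bool :=
  [&& e (f p1) (f p2), alive_at e f (val t1).+1 (f p1) & alive_at e f (val t1).+1 (f p2)].

(* Main.v *)
Require Import Defs.
From mathcomp Require Import all_boot.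
From Stdlib Require Import Reals.
From mathcomp Require Import fingroup perm.
From Stdlib Require Import Lra ZArith.
Set Implicit Arguments. Unset Strict Implicit. Unset Printing Implicit Defensive.
Open Scope R_scope.


Lemma exp_pow_nat a (l : nat) : exp a ^ l = exp (a * INR l).
Proof.
induction l as [|l IH].
- rewrite /= Rmult_0_r exp_0; reflexivity.
- change (exp a ^ S l) with (exp a * exp a ^ l).
  rewrite IH -exp_plus S_INR; f_equal; ring.
Qed.

Lemma w_exp w : 0 <= w -> w * exp (- w) <= exp (-1).
Proof.
intro Hw.
have H := exp_ineq1_le (w - 1).
replace (exp (w - 1)) with (exp w * exp (-1)) in H by (rewrite -exp_plus; f_equal; ring).
have Hew : 0 < exp (- w) by apply exp_pos.
have E : exp w * exp (- w) = 1 by rewrite -exp_plus; replace (w + - w) with 0 by ring; apply exp_0.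
apply Rmult_le_reg_l with (exp w); [apply exp_pos|].
replace (exp w * (w * exp (- w))) with w by (rewrite -Rmult_assoc (Rmult_comm (exp w)) Rmult_assoc E; ring).
lra.
Qed.

Lemma Fbound_real (nn AA beta y : R) (l : nat) :
  0 < nn -> 0 < AA -> 0 < beta < 1 -> nn * (1 - beta) <= AA -> 0 <= y <= nn -> (1 <= l)%nat ->
  y / AA * (1 - y / nn) ^ l <= / (exp 1 * INR l * (1 - beta)).
Proof.
intros Hn HA Hb HAb Hy Hl.
have Hlr : 1 <= INR l by (change 1 with (INR 1); apply le_INR; apply/leP).
set z := y / nn.
have Hz0 : 0 <= z by (unfold z; apply Rmult_le_pos; [lra | left; apply Rinv_0_lt_compat; lra]).
have Hz1 : z <= 1.
  unfold z; apply Rmult_le_reg_r with nn; [lra|]; unfold Rdiv; rewrite Rmult_assoc Rinv_l; lra.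
have H1 : (1 - z) ^ l <= exp (- z) ^ l.
  apply pow_incr; split; [lra|]; have := exp_ineq1_le (- z); lra.
rewrite exp_pow_nat in H1.
have Hw := @w_exp (z * INR l) ltac:(nra).
replace (- z * INR l) with (- (z * INR l)) in H1 by ring.
have HyA : y / AA = z * (nn / AA) by (unfold z; field; lra).
have HnA : nn / AA <= / (1 - beta).
  apply Rmult_le_reg_r with (AA * (1 - beta)); [nra|].
  replace (nn / AA * (AA * (1 - beta))) with (nn * (1 - beta)) by (field; lra).
  replace (/ (1 - beta) * (AA * (1 - beta))) with AA by (field; lra). lra.
have Hep : 0 < exp (- (z * INR l)) by apply exp_pos.
have Hpow : 0 <= (1 - z) ^ l by apply pow_le; lra.
have HnA0 : 0 <= nn / AA by (apply Rmult_le_pos; [lra | left; apply Rinv_0_lt_compat; lra]).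
rewrite HyA.
apply Rle_trans with (z * (nn / AA) * exp (- (z * INR l))).
{ apply Rmult_le_compat_l; [nra | exact H1]. }
have Hz2 : z * exp (- (z * INR l)) <= exp (-1) / INR l.
  apply Rmult_le_reg_r with (INR l); [lra|].
  replace (exp (-1) / INR l * INR l) with (exp (-1)) by (field; lra).
  replace (z * exp (- (z * INR l)) * INR l) with (z * INR l * exp (- (z * INR l))) by ring. lra.
apply Rle_trans with ((exp (-1) / INR l) * / (1 - beta)).
{ replace (z * (nn / AA) * exp (- (z * INR l))) with ((z * exp (- (z * INR l))) * (nn / AA)) by ring.
  apply Rmult_le_compat; try lra. apply Rmult_le_pos; lra. }
apply Req_le. rewrite exp_Ropp. change (exp (IPR 1)) with (exp 1). field. split; [lra|]. split; [lra|]. have := exp_pos 1. lra.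
Qed.


Close Scope R_scope.

Section Main.
Variables (V : finType) (e : rel V) (n : nat) (S P1 : {set 'I_n}) (sigma : 'I_n -> V)
  (t1 p1 p2 : 'I_n) (fl : nat).
Hypotheses (esym : symmetric e) (HP1S : forall j, j \in P1 -> j \notin S)
  (Hp2S : p2 \notin S) (Hp1S : p1 \in S) (HP1t : forall j, j \in P1 -> val j <= val t1)
  (Ht1p2 : val t1 < val p2) (Hp2fl : val p2 < fl) (HSfl : forall j, j \in S -> val j < fl)
  (Hfln : fl < n) (HVn : #|V| = n).

Definition cond := cond_set S sigma.
Definition dead (s : seq V) := greedy_dead e set0 s.
Definition stepD (D : {set V}) (w : V) := if w \in D then D else D :|: (w |: [set z | e w z]).
Definition sigS := [set sigma j | j in S].
Definition avail (s : seq V) := [set w | (w \notin s) && (w \notin sigS)].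
Definition u := sigma p1.
Definition X (s : seq V) := if u \in dead s then set0
  else [set w in avail s | e u w && (w \notin dead s)].
Definition Tset (s : seq V) := [set f in cond | take (size s) (Defs.order f) == s].
Definition T s := #|Tset s|.
Definition C s := #|[set f in Tset s | event e t1 p1 p2 f]|.
Definition rk k := #|[set j in P1 | k <= val j]|.

Lemma greedy_rcons (D : {set V}) (s : seq V) (w : V) : greedy_dead e D (rcons s w) = stepD (greedy_dead e D s) w.
Proof. by elim: s D => [|x s IH] D //=. Qed.

Lemma stepD_sub (D : {set V}) (w : V) : D \subset stepD D w.
Proof. rewrite /stepD; case: ifP => _ //; exact: subsetUl. Qed.

Lemma dead_rcons_sub (s : seq V) (w : V) : dead s \subset dead (rcons s w).
Proof. by rewrite /dead greedy_rcons stepD_sub. Qed.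

Lemma size_order (f : {ffun 'I_n -> V}) : size (Defs.order f) = n.
Proof. by rewrite /Defs.order size_map size_enum_ord. Qed.

Lemma nth_order (f : {ffun 'I_n -> V}) (i : 'I_n) x0 : nth x0 (Defs.order f) i = f i.
Proof. by rewrite /Defs.order (nth_map i) ?size_enum_ord ?ltn_ord // nth_ord_enum. Qed.

Lemma take_order_S (f : {ffun 'I_n -> V}) (i : 'I_n) : take i.+1 (Defs.order f) = rcons (take i (Defs.order f)) (f i).
Proof. by rewrite (take_nth (f i)) ?size_order ?ltn_ord // nth_order. Qed.

Lemma mem_take_order (f : {ffun 'I_n -> V}) k w : w \in take k (Defs.order f) -> exists j : 'I_n, val j < k /\ f j = w.
Proof.
rewrite /Defs.order -map_take => /mapP [j Hj ->]; exists j; split => //.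
move: Hj; rewrite in_take ?mem_enum // index_enum_ord //.
Qed.

Lemma inj_notin_take (f : {ffun 'I_n -> V}) k (j : 'I_n) : injective f -> k <= j -> f j \notin take k (Defs.order f).
Proof.
move=> Hi Hk; apply/negP => /mem_take_order [j' [Hj' E]].
have := Hi _ _ E => Ej; subst j'; by rewrite ltnNge Hk in Hj'.
Qed.

Lemma condP (f : {ffun 'I_n -> V}) : f \in cond -> injective f /\ (forall i, i \in S -> f i = sigma i).
Proof.
rewrite /cond /cond_set inE => /andP [/injectiveP Hi /forallP H]; split => // i Hi'.
by move/implyP: (H i) => /(_ Hi') /eqP.
Qed.

Lemma avail_f (s : seq V) (j : 'I_n) f : size s <= j -> j \notin S -> f \in Tset s -> f j \in avail s.
Proof.
move=> Hs HjS; rewrite /Tset inE => /andP [/condP [Hi HS] /eqP Ht].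
rewrite /avail inE -{1}Ht inj_notin_take //=.
apply/imsetP => [[i Hi' E]]; rewrite -(HS i Hi') in E.
have := Hi _ _ E => Eji; subst i; by rewrite Hi' in HjS.
Qed.

Lemma sym_le (s : seq V) (j : 'I_n) v v' : size s <= j -> v \in avail s -> v' \in avail s ->
  #|[set f in Tset s | f j == v]| <= #|[set f in Tset s | f j == v']|.
Proof.
move=> Hs Hv Hv'.
pose g := fun f : {ffun 'I_n -> V} => [ffun i => tperm v v' (f i)].
have ginj : injective g.
  apply: (can_inj (g:=g)) => f; apply/ffunP => i; by rewrite !ffunE tpermK.
rewrite -(card_imset _ ginj); apply: subset_leq_card.
apply/subsetP => _ /imsetP [f Hf ->].
move: Hf; rewrite /Tset !inE => /andP [/andP [Hc Ht] /eqP Hfj].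
have [Hi HS] : injective f /\ (forall i, i \in S -> f i = sigma i).
  by apply: condP; rewrite /cond /cond_set inE.
move: Hv Hv'; rewrite /avail !inE => /andP [Hvs HvS] /andP [Hvs' HvS'].
apply/andP; split; [apply/andP; split|].
- apply/andP; split.
  + apply/injectiveP => a b; rewrite !ffunE => /perm_inj; exact: Hi.
  + apply/forallP => i; apply/implyP => Hi'; rewrite ffunE HS //.
    have Hsi : sigma i \in sigS by apply: imset_f.
    rewrite tpermD //; apply/negP => /eqP E.
      by rewrite E Hsi in HvS.
    by rewrite E Hsi in HvS'.

- have -> : Defs.order (g f) = map (tperm v v') (Defs.order f).
    by rewrite /Defs.order -map_comp; apply: eq_map => i /=; rewrite ffunE.
  rewrite -map_take (eqP Ht) map_id_in //.
  move=> x Hx; rewrite tpermD //; apply/negP => /eqP E.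
    by rewrite E Hx in Hvs.
  by rewrite E Hx in Hvs'.
- by rewrite ffunE Hfj tpermL.
Qed.

Lemma sym_eq (s : seq V) (j : 'I_n) v v' : size s <= j -> v \in avail s -> v' \in avail s ->
  #|[set f in Tset s | f j == v]| = #|[set f in Tset s | f j == v']|.
Proof. by move=> *; apply/eqP; rewrite eqn_leq !sym_le. Qed.

Lemma part_card (B : {set {ffun 'I_n -> V}}) (j : 'I_n) (Q : pred V) :
  #|[set f in B | Q (f j)]| = \sum_(w | Q w) #|[set f in B | f j == w]|.
Proof.
rewrite -[LHS]sum1_card.
rewrite (@partition_big _ _ _ _ _ _ (mem [set f in B | Q (f j)]) (fun f => f j) Q (fun=> 1)) /=;
  last by move=> f; rewrite inE => /andP [].
apply: eq_bigr => w Qw; rewrite -sum1_card; apply: eq_bigl => f; rewrite !inE.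
by case: eqP => [->|]; rewrite ?Qw ?andbT ?andbF.
Qed.

Lemma sum_INR_le (I : Type) (r : seq I) (P : pred I) (a b : I -> nat) (K : R) :
  (forall i, P i -> (INR (a i) <= K * INR (b i))%R) ->
  (INR (\sum_(i <- r | P i) a i) <= K * INR (\sum_(i <- r | P i) b i))%R.
Proof.
move=> H; elim: r => [|x r IH]; first by rewrite !big_nil /=; lra.
rewrite !big_cons; case: ifP => Px //.
have E : forall m k, INR (m + k) = (INR m + INR k)%R by move=> m k; exact: plus_INR.
rewrite !E Rmult_plus_distr_l; apply: Rplus_le_compat => //; exact: H.
Qed.


Definition A := n - fl.
Definition F (r y : nat) : R := (INR y / INR A * (1 - INR y / INR n) ^ r)%R.
Fixpoint hmax (r x : nat) : R :=
  match x with 0 => F r 0 | x'.+1 => Rmax (hmax r x') (F r x'.+1) end.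

Lemma n_pos : (0 < INR n)%R.
Proof. apply: lt_0_INR; apply/ltP; exact: leq_ltn_trans Hfln. Qed.

Lemma A_pos : (0 < INR A)%R.
Proof. apply: lt_0_INR; apply/ltP; by rewrite /A subn_gt0. Qed.

Lemma F0 r : F r 0 = 0%R.
Proof. by rewrite /F /= Rdiv_0_l Rmult_0_l. Qed.

Lemma F_nonneg r y : y <= n -> (0 <= F r y)%R.
Proof.
move=> Hy; have Hn := n_pos; have HA := A_pos.
have Hyn : (INR y <= INR n)%R by apply: le_INR; apply/leP.
apply: Rmult_le_pos.
- apply: Rmult_le_pos; [apply: pos_INR | left; apply: Rinv_0_lt_compat; lra].
- apply: pow_le.
  have : (INR y / INR n <= 1)%R.
    apply (Rmult_le_reg_r (INR n)); first lra.
    rewrite /Rdiv Rmult_assoc Rinv_l; lra.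
  lra.
Qed.

Lemma hmax_ge r x y : y <= x -> (F r y <= hmax r x)%R.
Proof.
elim: x y => [|x IH] y Hy /=.
- by move: Hy; rewrite leqn0 => /eqP ->; lra.
- move: Hy; rewrite leq_eqVlt => /orP [/eqP ->|Hy]; first exact: Rmax_r.
  apply: Rle_trans (Rmax_l _ _); exact: IH.
Qed.

Lemma hmax_mono r x x' : x <= x' -> (hmax r x <= hmax r x')%R.
Proof.
elim: x' x => [|x' IH] x H.
- by move: H; rewrite leqn0 => /eqP ->; lra.
- move: H; rewrite leq_eqVlt => /orP [/eqP ->|H]; first lra.
  apply: Rle_trans (Rmax_l _ _); exact: IH.
Qed.

Lemma hmax_ex r x : exists y, y <= x /\ hmax r x = F r y.
Proof.
elim: x => [|x [y [Hy E]]] /=; first by exists 0.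
rewrite /Rmax; case: Rle_dec => _.
- by exists x.+1.
- exists y; split => //; exact: leqW.
Qed.

Lemma hmax0 r : hmax r 0 = 0%R.
Proof. exact: F0. Qed.

Lemma hmax_nonneg r x : (0 <= hmax r x)%R.
Proof. rewrite -(F0 r); exact: hmax_ge. Qed.

Lemma hmax_step r x : x <= n -> ((1 - INR x / INR n) * hmax r x <= hmax r.+1 x)%R.
Proof.
move=> Hx; have [y [Hy ->]] := hmax_ex r x.
apply: Rle_trans (hmax_ge r.+1 Hy).
have Hyn : y <= n by exact: leq_trans Hx.
have H0 := F_nonneg r Hyn.
have Hn := n_pos.
have Hle : (INR y / INR n <= INR x / INR n)%R.
  apply: Rmult_le_compat_r; first by left; apply: Rinv_0_lt_compat.
  by apply: le_INR; apply/leP.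
rewrite /F /=.
replace (INR y / INR A * ((1 - INR y / INR n) * (1 - INR y / INR n) ^ r))%R
  with ((1 - INR y / INR n) * F r y)%R by (rewrite /F; ring).
apply: Rmult_le_compat_r => //; lra.
Qed.


Lemma Tset_rcons (s : seq V) w (i : 'I_n) : nat_of_ord i = size s ->
  Tset (rcons s w) = [set f in Tset s | f i == w].
Proof.
move=> Hi; apply/setP => f; rewrite /Tset !inE size_rcons -Hi take_order_S eqseq_rcons.
by rewrite !andbA.
Qed.

Lemma T_split (s : seq V) (i : 'I_n) : nat_of_ord i = size s ->
  T s = \sum_w T (rcons s w).
Proof.
move=> Hi; rewrite /T.
transitivity (#|[set f in Tset s | predT (f i)]|).
  by apply: eq_card => f; rewrite in_set andbT.
rewrite part_card; apply: eq_bigr => w _; by rewrite (Tset_rcons w Hi).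
Qed.

Lemma C_split (s : seq V) (i : 'I_n) : nat_of_ord i = size s ->
  C s = \sum_w C (rcons s w).
Proof.
move=> Hi; rewrite /C.
transitivity (#|[set f in [set f in Tset s | event e t1 p1 p2 f] | predT (f i)]|).
  by apply: eq_card => f; rewrite !in_set /= andbT.
rewrite part_card; apply: eq_bigr => w _; rewrite (Tset_rcons w Hi).
apply: eq_card => f; rewrite !in_set.
by case: (event e t1 p1 p2 f); case: (f i == w); rewrite ?andbT ?andbF.
Qed.

Lemma C_le_T s : C s <= T s.
Proof. apply: subset_leq_card; apply/subsetP => f; rewrite in_set => /andP [] //. Qed.

Lemma rk_end : rk t1.+1 = 0.
Proof.
rewrite /rk; apply: eq_card0 => j; rewrite in_set.
case Hj: (j \in P1) => //=; by rewrite ltnNge HP1t.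
Qed.

Lemma rk_0 : rk 0 = #|P1|.
Proof. by apply: eq_card => j; rewrite in_set leq0n andbT. Qed.

Lemma rk_step k (i : 'I_n) : val i = k -> rk k = (i \in P1) + rk k.+1.
Proof.
move=> Hi; rewrite /rk (cardsD1 i) in_set Hi leqnn andbT; congr (_ + _).
apply: eq_card => j; rewrite !in_set -Hi ltn_neqAle.
rewrite in_set1; have -> : (j != i) = (val i != val j) by rewrite eq_sym.
by case: (j \in P1); case: (val i == val j); rewrite ?andbF ?andbT.
Qed.

Lemma X_sub_avail s : X s \subset avail s.
Proof.
rewrite /X; case: ifP => _; first exact: sub0set.
by apply/subsetP => w; rewrite in_set => /andP [].
Qed.

Lemma avail_rcons s w : avail (rcons s w) \subset avail s.
Proof.
apply/subsetP => x; rewrite /avail !in_set mem_rcons in_cons negb_or.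
by case/andP => /andP [_ ->] ->.
Qed.

Lemma X_mono s w : X (rcons s w) \subset X s.
Proof.
have Hd := dead_rcons_sub s w.
rewrite /X; case: ifP => Hu1; first exact: sub0set.
have -> : (u \in dead s) = false.
  apply/negbTE/negP => H; move/subsetP: Hd => /(_ _ H); by rewrite Hu1.
apply/subsetP => x; rewrite !in_set => /andP [Hav /andP [Hux Hxd]].
rewrite Hux /=; apply/andP; split.
- move/subsetP: (avail_rcons s w) => /(_ x); rewrite /avail !in_set; exact.
- apply/negP => H; move/subsetP: Hd => /(_ _ H); by rewrite (negbTE Hxd).
Qed.

Lemma X_kill s w : w \in X s -> X (rcons s w) = set0.
Proof.
rewrite /X; case: ifP => Hu; first by rewrite in_set0.
rewrite in_set => /andP [_ /andP [Huw Hwd]].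
have -> : u \in dead (rcons s w).
  rewrite /dead greedy_rcons -/(dead s) /stepD (negbTE Hwd) !in_set esym Huw.
  by rewrite !orbT.
by [].
Qed.

Lemma card_low m (H : m <= n) : #|[set j : 'I_n | val j < m]| = m.
Proof.
have -> : [set j : 'I_n | val j < m] = [set widen_ord H k | k in 'I_m].
  apply/setP => j; rewrite in_set; apply/idP/imsetP.
  - move=> Hj; exists (Ordinal Hj) => //; exact: val_inj.
  - by move=> [k _ ->] /=.
rewrite card_imset ?card_ord //.
by move=> a b /(congr1 val) /= /val_inj.
Qed.

Lemma card_high : #|[set j : 'I_n | fl <= val j]| = n - fl.
Proof.
have Hfl : fl <= n by exact: ltnW.
have -> : [set j : 'I_n | fl <= val j] = ~: [set j : 'I_n | val j < fl].
  by apply/setP => j; rewrite !in_set leqNgt.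
have := cardsC [set j : 'I_n | val j < fl]; rewrite card_ord card_low //.
move=> H; apply/eqP; rewrite -(eqn_add2l fl) subnKC // H; exact: eqxx.
Qed.

Lemma A_le_avail s f : f \in Tset s -> size s <= fl -> A <= #|avail s|.
Proof.
move=> Hf Hs.
have Hc : f \in cond by move: Hf; rewrite in_set => /andP [].
have [Hi _] := condP Hc.
rewrite /A -card_high -(card_in_imset (f:=f) (D := [set j : 'I_n | fl <= val j])); last first.
  by move=> a b _ _; apply: Hi.
apply: subset_leq_card; apply/subsetP => _ /imsetP [j Hj ->].
rewrite in_set in Hj.
apply: avail_f => //; first exact: leq_trans Hj.
apply/negP => HjS; have := HSfl HjS; by rewrite ltnNge Hj.
Qed.


Lemma INR_muln m k : INR (m * k) = (INR m * INR k)%R.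
Proof. exact: mult_INR. Qed.
Lemma INR_addn m k : INR (m + k) = (INR m + INR k)%R.
Proof. exact: plus_INR. Qed.

Lemma ev_X s f : f \in Tset s -> size s = t1.+1 -> event e t1 p1 p2 f -> f p2 \in X s.
Proof.
move=> Hf Hs.
have Hc : f \in cond by move: Hf; rewrite in_set => /andP [].
have Ht : take (size s) (Defs.order f) = s by move: Hf; rewrite in_set => /andP [_ /eqP].
have [_ HS] := condP Hc.
rewrite /event /alive_at.
have -> : (val t1).+1 = size s by rewrite Hs.
rewrite Ht HS // => /and3P [Huv Hu Hv].
rewrite /X /dead /u (negbTE Hu) in_set Huv Hv andbT.
rewrite andbT; apply: avail_f => //; by rewrite Hs.
Qed.

Lemma base s : size s = t1.+1 -> (INR (C s) <= hmax 0 #|X s| * INR (T s))%R.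
Proof.
move=> Hs.
have [HT0|HTpos] := posnP (T s).
  have := C_le_T s; rewrite HT0 leqn0 => /eqP ->; rewrite Rmult_0_r /=; lra.
have [f0 Hf0] : exists f, f \in Tset s by apply/set0Pn; rewrite -card_gt0.
have Hp2s : size s <= p2 by rewrite Hs.
have Hw0 := avail_f Hp2s Hp2S Hf0.
set c := #|[set f in Tset s | f p2 == f0 p2]|.
have Hcw : forall w, w \in avail s -> #|[set f in Tset s | f p2 == w]| = c.
  by move=> w Hw; rewrite /c (sym_eq Hp2s Hw Hw0).
have HC : C s <= #|X s| * c.
  apply: (@leq_trans #|[set f in Tset s | f p2 \in X s]|).
  - apply: subset_leq_card; apply/subsetP => f; rewrite in_set => /andP [Hf Hev].
    rewrite in_set Hf /=; exact: ev_X.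
  - have := part_card (Tset s) p2 (fun w => w \in X s) => /= ->.
    rewrite -sum_nat_const; apply/eq_leq/eq_bigr => w Hw; apply: Hcw.
    by move/subsetP: (X_sub_avail s) => /(_ _ Hw).
have HT : T s = #|avail s| * c.
  rewrite /T.
  transitivity #|[set f in Tset s | predT (f p2)]|.
    by apply: eq_card => f; rewrite [RHS]in_set /= andbT.
  rewrite part_card (bigID (mem (avail s))) /= [X in _ + X]big1 ?addn0.
    rewrite -sum_nat_const; apply: eq_bigr => w Hw; exact: Hcw.
  move=> w Hw; apply: eq_card0 => f; rewrite in_set; apply/negP => /andP [Hf /eqP Hfw].
  have := avail_f Hp2s Hp2S Hf; by rewrite Hfw (negbTE Hw).
have HA : A <= #|avail s|.
  apply: (A_le_avail Hf0); rewrite Hs; exact: leq_trans Ht1p2 (ltnW Hp2fl).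
have HAr : (INR A <= INR #|avail s|)%R by apply: le_INR; apply/leP.
have HCr : (INR (C s) <= INR (#|X s| * c))%R by apply: le_INR; apply/leP.
have Hh := hmax_ge 0 (leqnn #|X s|).
rewrite /F /= Rmult_1_r in Hh.
have HA0 := A_pos.
have Hx0 := pos_INR #|X s|.
have Hc0 := pos_INR c.
apply: Rle_trans HCr _.
rewrite HT !INR_muln.
apply: Rle_trans (_ : (INR #|X s| / INR A * (INR #|avail s| * INR c) <= _)%R).
  replace (INR #|X s| * INR c)%R with (INR #|X s| / INR A * (INR A * INR c))%R by (field; lra).
  apply: Rmult_le_compat_l; first by apply: Rmult_le_pos => //; left; apply: Rinv_0_lt_compat.
  exact: Rmult_le_compat_r.
apply: Rmult_le_compat_r => //; exact: Rmult_le_pos (pos_INR _) Hc0.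
Qed.


Lemma main_inv d : forall s, size s + d = t1.+1 ->
  (INR (C s) <= hmax (rk (size s)) #|X s| * INR (T s))%R.
Proof.
elim: d => [|d IH] s Hs.
  rewrite addn0 in Hs; rewrite Hs rk_end; exact: base.
set k := size s.
have Hk : k < n.
  have : k < t1.+1 by rewrite -Hs -addSnnS leq_addr.
  move=> H; exact: leq_trans H (ltn_ord t1).
pose i := Ordinal Hk.
have Hi : nat_of_ord i = size s by [].
have IH' : forall w, (INR (C (rcons s w)) <= hmax (rk k.+1) #|X (rcons s w)| * INR (T (rcons s w)))%R.
  move=> w; have := IH (rcons s w); rewrite size_rcons; apply; by rewrite addSnnS.
have Hrk := @rk_step k i erefl.
have [HT0|HTpos] := posnP (T s).
  have := C_le_T s; rewrite HT0 leqn0 => /eqP ->; rewrite Rmult_0_r /=; lra.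
have Hxn : #|X s| <= n by rewrite -HVn max_card.
have Hmono : forall r w, (hmax r #|X (rcons s w)| <= hmax r #|X s|)%R.
  move=> r w; apply: hmax_mono; exact: subset_leq_card (X_mono s w).
case Hin: (i \in P1) in Hrk.
-
  rewrite Hrk add1n.
  set r := rk k.+1.
  have HiS : i \notin S := HP1S Hin.
  have Hsi : size s <= i by [].
  have [f0 Hf0] : exists f, f \in Tset s by apply/set0Pn; rewrite -card_gt0.
  have Hw0 := avail_f Hsi HiS Hf0.
  set c := T (rcons s (f0 i)).
  have Hcw : forall w, w \in avail s -> T (rcons s w) = c.
    by move=> w Hw; rewrite /c /T !(Tset_rcons _ Hi); apply: sym_eq.
  have Hzero : forall w, w \notin avail s -> T (rcons s w) = 0.
    move=> w Hw; rewrite /T (Tset_rcons _ Hi); apply: eq_card0 => f; rewrite in_set.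
    apply/negP => /andP [Hf /eqP Hfw].
    have := avail_f Hsi HiS Hf; by rewrite Hfw (negbTE Hw).
  have HTa : T s = #|avail s| * c.
    rewrite (T_split Hi) (bigID (mem (avail s))) /= [X in _ + X]big1 ?addn0.
      rewrite -sum_nat_const; apply: eq_bigr => w Hw; exact: Hcw.
    move=> w Hw; exact: Hzero.
  have HTx : T s = #|X s| * c + \sum_(w | w \notin X s) T (rcons s w).
    rewrite (T_split Hi) (bigID (mem (X s))) /=; congr (_ + _).
    rewrite -sum_nat_const; apply: eq_bigr => w Hw; apply: Hcw.
    by move/subsetP: (X_sub_avail s) => /(_ _ Hw).
  set B := hmax r #|X s|.
  have HC1 : (INR (C s) <= B * INR (\sum_(w | w \notin X s) T (rcons s w)))%R.
    rewrite (C_split Hi) (bigID (mem (X s))) /= INR_addn.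
    have H1 : (INR (\sum_(w | w \in X s) C (rcons s w)) <= 0 * INR (\sum_(w | w \in X s) T (rcons s w)))%R.
      apply: sum_INR_le => w Hw; have := IH' w; by rewrite (X_kill Hw) cards0 hmax0.
    have H2 : (INR (\sum_(w | w \notin X s) C (rcons s w)) <= B * INR (\sum_(w | w \notin X s) T (rcons s w)))%R.
      apply: sum_INR_le => w Hw; apply: Rle_trans (IH' w) _.
      apply: Rmult_le_compat_r; [exact: pos_INR | exact: Hmono].
    rewrite Rmult_0_l in H1; lra.
  have Han : #|avail s| <= n by rewrite -HVn max_card.
  have Hxa : #|X s| <= #|avail s| by exact: subset_leq_card (X_sub_avail s).
  have Hstep := hmax_step r Hxn.
  have HB0 : (0 <= B)%R := hmax_nonneg r #|X s|.
  have Hn := n_pos.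
  have Hanr : (INR #|avail s| <= INR n)%R by apply: le_INR; apply/leP.
  have Hxr := pos_INR #|X s|.
  have Hc0 := pos_INR c.
  have HTr : INR (T s) = (INR #|avail s| * INR c)%R by rewrite HTa INR_muln.
  have HRr : INR (\sum_(w | w \notin X s) T (rcons s w)) = (INR (T s) - INR #|X s| * INR c)%R.
    by rewrite {1}HTx INR_addn INR_muln; ring.
  rewrite HRr in HC1.
  apply: Rle_trans HC1 _.
  apply: Rle_trans (_ : ((1 - INR #|X s| / INR n) * B * INR (T s) <= _)%R); last first.
    apply: Rmult_le_compat_r; [exact: pos_INR | exact: Hstep].
  rewrite HTr.
  have E : ((1 - INR #|X s| / INR n) * B * (INR #|avail s| * INR c) -
            B * (INR #|avail s| * INR c - INR #|X s| * INR c) =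
            B * INR #|X s| * INR c * ((INR n - INR #|avail s|) / INR n))%R.
    by field; lra.
  have : (0 <= B * INR #|X s| * INR c * ((INR n - INR #|avail s|) / INR n))%R.
    apply: Rmult_le_pos; first by apply: Rmult_le_pos => //; exact: Rmult_le_pos.
    apply: Rmult_le_pos; first lra.
    by left; apply: Rinv_0_lt_compat.
  lra.
-
  rewrite Hrk add0n (C_split Hi) (T_split Hi).
  apply: sum_INR_le => w _; apply: Rle_trans (IH' w) _.
  apply: Rmult_le_compat_r; [exact: pos_INR | exact: Hmono].
Qed.

End Main.

Lemma floor_le (beta : R) (n : nat) : (0 < beta)%R -> (INR (floorn beta n) <= beta * INR n)%R.
Proof.
move=> Hb; rewrite /floorn.
have [H1 _] := base_Int_part (beta * INR n).
have Hn := pos_INR n.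
destruct (Int_part (beta * INR n)) as [|p|p] eqn:Ez.
- rewrite /=; nra.
- rewrite INR_IZR_INZ Z2Nat.id //; exact: Pos2Z.is_nonneg.
- rewrite Z2Nat.inj_neg /=; nra.
Qed.

Theorem mainTheorem5 (beta : R) (V : finType) (e : rel V) (n : nat)
  (P1 S : {set 'I_n}) (l : nat) (t1 p1 p2 : 'I_n) (sigma : 'I_n -> V) :
  (0 < beta < 1)%R ->
  symmetric e -> irreflexive e ->
  #|V| = n ->
  P1 \subset [set i : 'I_n | val i < floorn beta n] ->
  #|P1| = l -> 1 <= l ->
  t1 \in P1 -> (forall i, i \in P1 -> val i <= val t1) ->
  val p1 < val p2 -> val p2 < floorn beta n ->
  p1 \notin P1 -> p2 \notin P1 -> val t1 < val p1 ->
  S \subset [set i : 'I_n | val i < floorn beta n] :\: (P1 :|: [set p2]) ->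
  p1 \in S ->
  {in S &, injective sigma} ->
  (INR #|[set f in cond_set S sigma | event e t1 p1 p2 f]|
     <= INR #|cond_set S sigma| / (exp 1 * INR l * (1 - beta)))%R.
Proof.
move=> Hb esym _ HVn _ Hl Hl1 _ HP1t Hp12 Hp2fl _ _ Ht1p1 HS Hp1S _.
set fl := floorn beta n in Hp2fl HS *.
have HflR : (INR fl <= beta * INR n)%R by apply: floor_le; case: Hb.
have Hn0 : (0 < INR n)%R.
  apply: lt_0_INR; apply/ltP; exact: leq_ltn_trans (ltn_ord t1).
have Hfln : fl < n.
  apply/ltP; apply: INR_lt; case: Hb => Hb0 Hb1; nra.
have HSin : forall j, j \in S -> (val j < fl) && (j \notin P1) && (j != p2).
  move=> j Hj; move/subsetP: HS => /(_ _ Hj); rewrite !inE negb_or.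
  by case/andP => /andP [-> ->] ->.
have HSfl : forall j, j \in S -> val j < fl.
  by move=> j /HSin /andP [/andP [-> _] _].
have HP1S : forall j, j \in P1 -> j \notin S.
  move=> j Hj; apply/negP => /HSin /andP [/andP [_ H] _]; by rewrite Hj in H.
have Hp2S : p2 \notin S.
  apply/negP => /HSin /andP [_ H]; by rewrite eqxx in H.
have Ht1p2 : val t1 < val p2 by exact: ltn_trans Hp12.
have Hinv := @main_inv V e n S P1 sigma t1 p1 p2 fl esym HP1S Hp2S Hp1S HP1t Ht1p2 Hp2fl HSfl Hfln HVn t1.+1 [::] (erefl _).
rewrite /= rk_0 Hl in Hinv.
have HT : T S sigma [::] = #|cond_set S sigma|.
  apply: eq_card => f; by rewrite /Tset in_set take0 eqxx andbT.
have HC : C e S sigma t1 p1 p2 [::] = #|[set f in cond_set S sigma | event e t1 p1 p2 f]|.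
  apply: eq_card => f; rewrite /C /Tset !in_set take0 eqxx andbT //.
rewrite HT HC in Hinv.
apply: Rle_trans Hinv _.
have [y [Hy ->]] := hmax_ex n fl l #|X e S sigma p1 [::]|.
have Hyn : y <= n.
  apply: (leq_trans Hy); apply: leq_trans (max_card _) _; by rewrite HVn.
have HA : INR (A n fl) = (INR n - INR fl)%R.
  rewrite /A minus_INR //; apply/leP; exact: ltnW.
have HAp : (0 < INR (A n fl))%R.
  apply: lt_0_INR; apply/ltP; by rewrite /A subn_gt0.
have Hyr : (0 <= INR y <= INR n)%R.
  split; [exact: pos_INR | apply: le_INR; apply/leP; exact: Hyn].
have HF := @Fbound_real (INR n) (INR (A n fl)) beta (INR y) l Hn0 HAp Hb
  ltac:(rewrite HA; nra) Hyr Hl1.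
rewrite /F Rmult_comm /Rdiv.
apply: Rmult_le_compat_l; first exact: pos_INR.
exact: HF.
Qed.
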